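(* Let $q$ be a positive integer and suppose that for each divisor $d$ of $q$ we are given a function $a_d:\mathbb Z\to\mathbb C$ of period $d$ with $|a_d(n)|\le1$ for all $n$, such that $a_{d_1d_2}(n)=a_{d_1}(n)a_{d_2}(n)$ whenever $d_1d_2\mid q$ and $\gcd(d_1,d_2)=1$. If $I$ is an interval of length $N$, then $$\frac1N\Big|\sum_{n\in I}a_q(n)\Big|\ll\Big(1+\frac{q\log q}{N}\Big)\prod_{p^e\| q}\ \max_{b\bmod p^e}\Big|\frac1{p^e}\sum_{r\bmod p^e}a_{p^e}(r)\,e\Big(\frac{br}{p^e}\Big)\Big|.$$
   Context: $e(x)=e^{2\pi i x}$; the sum over $I$ is over integers; the implied constant is absolute. *)

(* Defs.v *)
From HB Require Import structures.
From mathcomp Require Import all_boot all_order all_algebra.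
From mathcomp Require Export reals exp trigo.
From mathcomp Require Export complex.

Set Implicit Arguments.
Unset Strict Implicit.
Unset Printing Implicit Defensive.

Import Order.TTheory GRing.Theory Num.Theory.
Local Open Scope ring_scope.

Definition eC {R : realType} (x : R) : R[i] :=
  (Complex (cos (2 * pi * x)) (sin (2 * pi * x)))%C.

Definition cmod {R : realType} (z : R[i]) : R := ComplexField.Normc.normc z.

(* Main.v *)
Require Import Defs.
From HB Require Import structures.
From mathcomp Require Import all_boot all_order all_algebra.
From mathcomp Require Import reals exp trigo complex.
From mathcomp Require Import ring lra zify.
Import Order.TTheory GRing.Theory Num.Theory.
Local Open Scope ring_scope.

Lemma uniq_crt (m n : nat) (b c1 c2 d1 d2 : int) : (0 < m)%N -> (0 < n)%N -> coprime m n ->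
  0 <= c1 < m%:Z -> 0 <= c2 < m%:Z -> 0 <= d1 < n%:Z -> 0 <= d2 < n%:Z ->
  ((m * n)%N%:Z %| b - (c1 * n%:Z + d1 * m%:Z))%Z ->
  ((m * n)%N%:Z %| b - (c2 * n%:Z + d2 * m%:Z))%Z -> c1 = c2 /\ d1 = d2.
Proof.
move=> m0 n0 cop hc1 hc2 hd1 hd2 /dvdzP[w1 h1] /dvdzP[w2 h2].
have cz : coprimez m%:Z n%:Z by rewrite coprimezE.
have cz' : coprimez n%:Z m%:Z by rewrite coprimez_sym.
rewrite PoszM in h1 h2.
have e : (c1 - c2) * n%:Z + (d1 - d2) * m%:Z = (w2 - w1) * (m%:Z * n%:Z).
  lia.
have dm : (m%:Z %| (c1 - c2) * n%:Z)%Z.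
  apply/dvdzP; exists ((w2 - w1) * n%:Z - (d1 - d2)).
  lia.
have dn : (n%:Z %| (d1 - d2) * m%:Z)%Z.
  apply/dvdzP; exists ((w2 - w1) * m%:Z - (c1 - c2)).
  lia.
rewrite Gauss_dvdzl // in dm; rewrite Gauss_dvdzl // in dn.
case/dvdzP: dm => u hu; case/dvdzP: dn => v hv.
move: hc1 hc2 hd1 hd2 => /andP[? ?] /andP[? ?] /andP[? ?] /andP[? ?].
have mz : 0 < m%:Z by rewrite ltz_nat.
have nz : 0 < n%:Z by rewrite ltz_nat.
clear h1 h2 e.
have u0 : u = 0 by nia.
have v0 : v = 0 by nia.
move: hu hv; rewrite u0 v0 !mul0r => /eqP; rewrite subr_eq0 => /eqP -> /eqP.
by rewrite subr_eq0 => /eqP ->.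
Qed.

Section S.
Variable R : realType.
Lemma eCD (x y : R) : eC (x + y) = eC x * eC y.
Proof.
rewrite /eC mulrDr cosD sinD /=.
apply/eqP; rewrite eq_complex /=. 
apply/andP; split; apply/eqP; lra.
Qed.
Lemma eC0 : eC (0:R) = 1.
Proof. by rewrite /eC mulr0 cos0 sin0. Qed.
Lemma eC1 (x : R) : eC (x + 1) = eC x.
Proof. have e : 2 * pi = pi *+ 2 :> R by rewrite mulr_natl.
by rewrite /eC mulrDr mulr1 e cosD2pi sinD2pi. Qed.
Lemma cmod_eC (x : R) : cmod (eC x) = 1.
Proof. by rewrite /cmod /eC /= cos2Dsin2 sqrtr1. Qed.
Lemma eCn (x : R) (n : nat) : eC (x + n%:R) = eC x.
Proof.
elim: n x => [|n IH] x; first by rewrite addr0.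
by rewrite -addn1 natrD addrA eC1 IH.
Qed.
Lemma eCz (x : R) (z : int) : eC (x + z%:~R) = eC x.
Proof.
case: z => n; first by rewrite eCn.
rewrite NegzE.
have -> : (- (n.+1)%:Z)%:~R = - (n.+1)%:R :> R by rewrite intrN.
by rewrite -[in RHS](subrK (n.+1)%:R x) eCn.
Qed.

Definition E (q : nat) (k : int) : R[i] := eC ((k%:~R : R) / q%:R).

Lemma E_add q k1 k2 : E q (k1 + k2) = E q k1 * E q k2.
Proof. by rewrite /E -eCD intrD mulrDl. Qed.
Lemma E0 q : E q 0 = 1.
Proof. by rewrite /E mul0r eC0. Qed.
Lemma cmod_E q k : cmod (E q k) = 1.
Proof. exact: cmod_eC. Qed.
Lemma E_cong (q : nat) k1 k2 : (0 < q)%N -> (q%:Z %| k1 - k2)%Z -> E q k1 = E q k2.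
Proof.
move=> q0 /dvdzP [z hz].
have -> : k1 = k2 + z * q by rewrite -hz addrC subrK.
rewrite /E intrD mulrDl intrM mulfK; last by rewrite pnatr_eq0 -lt0n.
by rewrite eCz.
Qed.
Lemma E_pow q k (n : nat) : E q (k * n%:Z) = E q k ^+ n.
Proof.
elim: n => [|n IH]; first by rewrite mulr0 E0 expr0.
by rewrite -addn1 PoszD mulrDr E_add IH mulr1 exprD expr1.
Qed.
Lemma E_scale (m n : nat) k : (0 < n)%N -> E m k = E (m * n) (k * n%:Z).
Proof.
move=> n0; rewrite /E natrM intrM.
have n0' : (n%:R : R) != 0 by rewrite pnatr_eq0 -lt0n.
rewrite -[(n%:Z)%:~R]/(n%:R : R) invfM mulrACA mulfV // mulr1 //.
Qed.
Lemma cmod_ge0 (z : R[i]) : 0 <= cmod z.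
Proof. by case: z => a b; rewrite /cmod /= sqrtr_ge0. Qed.
Lemma cmodM (z w : R[i]) : cmod (z * w) = cmod z * cmod w.
Proof. exact: ComplexField.Normc.normcM. Qed.
Lemma cmodD (z w : R[i]) : cmod (z + w) <= cmod z + cmod w.
Proof. exact: le_normcD. Qed.
Lemma cmodN (z : R[i]) : cmod (- z) = cmod z.
Proof. exact: normcN. Qed.
Lemma cmod0 : cmod (0 : R[i]) = 0.
Proof. exact: ComplexField.Normc.normc0. Qed.
Lemma cmod_eq0 (z : R[i]) : cmod z = 0 -> z = 0.
Proof. exact: ComplexField.Normc.eq0_normc. Qed.
Lemma cmodX (z : R[i]) n : cmod (z ^+ n) = cmod z ^+ n.
Proof. elim: n => [|n IH]; first by rewrite !expr0 /cmod ComplexField.Normc.normc1.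
by rewrite !exprS cmodM IH. Qed.
Lemma cmod1 : cmod (1 : R[i]) = 1.
Proof. exact: ComplexField.Normc.normc1. Qed.
Lemma cmod_nat n : cmod (n%:R : R[i]) = n%:R.
Proof. by rewrite /cmod -[n%:R]/(1 *+ n) normcMn ComplexField.Normc.normc1. Qed.
Lemma cmod_invnat n : cmod ((n%:R : R[i])^-1) = (n%:R)^-1.
Proof. by rewrite /cmod ComplexField.Normc.normcV -/(cmod _) cmod_nat. Qed.
Lemma cmod_sum (I : Type) (s : seq I) (P : pred I) (F : I -> R[i]) :
  cmod (\sum_(i <- s | P i) F i) <= \sum_(i <- s | P i) cmod (F i).
Proof.
elim/big_rec2: _ => [|i y z _ Hz]; first by rewrite cmod0.
by apply: le_trans (cmodD _ _) _; rewrite lerD2l.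
Qed.
Lemma Re_le_cmod (z : R[i]) : complex.Re z <= cmod z.
Proof.
case: z => a b; rewrite /cmod /=.
apply: le_trans (ler_norm a) _.
rewrite -sqrtr_sqr ler_sqrt ?lerDl ?addr_ge0 //; exact: sqr_ge0.
Qed.
Lemma cmod_1subX (w : R[i]) k : cmod w = 1 -> cmod (1 - w ^+ k) <= k%:R * cmod (1 - w).
Proof.
move=> w1; elim: k => [|k IH]; first by rewrite expr0 subrr cmod0 mul0r.
have -> : 1 - w ^+ k.+1 = (1 - w ^+ k) + w ^+ k * (1 - w) by rewrite exprSr; ring.
apply: le_trans (cmodD _ _) _; rewrite cmodM cmodX w1 expr1n mul1r -nat1r mulrDl mul1r addrC.
by rewrite lerD2l.
Qed.
Lemma cos_nonpos (y : R) : 1/4 <= y <= 1/2 -> cos (2 * pi * y) <= 0.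
Proof.
move=> /andP[y1 y2].
have p0 := pi_gt0 R.
have -> : 2 * pi * y = (2 * pi * y - pi / 2) + pi / 2 by rewrite subrK.
rewrite cosDpihalf oppr_le0; apply: sin_ge0_pi.
apply/andP; split; nra.
Qed.
Lemma LB (q j : nat) : (0 < j < q)%N ->
  ((2 * minn j (q - j))%:R : R) <= q%:R * cmod (1 - E q j%:Z).
Proof.
move=> /andP[j0 jq].
set t := minn j (q - j).
have t1 : (1 <= t)%N by rewrite /t; lia.
have t2 : (2 * t <= q)%N by rewrite /t; lia.
set k := (q %/ (2 * t))%N.
have hd := divn_eq q (2 * t).
have hr : ((q %% (2 * t))%N < 2 * t)%N by rewrite ltn_pmod //; lia.
rewrite -/k in hd.
set r := (q %% (2 * t))%N in hd hr.
have k1 : (1 <= k)%N by nia.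
have hk1 : (2 * t * k <= q)%N by nia.
have hk2 : (q <= 4 * t * k)%N by nia.
have q0 : (0 < q)%N by lia.
have qR : (0 : R) < q%:R by rewrite ltr0n.
have hRe : complex.Re (E q (j%:Z * k%:Z)) = cos (2 * pi * ((t * k)%:R / q%:R)).
  case: (leqP j (q - j)) => hj.
    have -> : t = j by rewrite /t; lia.
    by rewrite /E /= -PoszM.
  have -> : t = (q - j)%N.
    rewrite /t; lia.
  rewrite (@E_cong q _ (- ((q - j)%N%:Z * k%:Z))) //; last first.
    apply/dvdzP; exists k%:Z; rewrite opprK -mulrDl.
    have -> : j%:Z + (q - j)%N%:Z = q%:Z by rewrite -PoszD; congr Posz; lia.
    by rewrite mulrC.
  by rewrite /E /= -PoszM intrN mulNr mulrN cosN.
have cle : cos (2 * pi * (((t * k)%:R : R) / q%:R)) <= 0.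
  apply: cos_nonpos.
  have e : (t * k)%:R / q%:R * q%:R = (t * k)%:R :> R by rewrite mulfVK // gt_eqF.
  have a1 : (q%:R : R) <= 4 * (t * k)%:R by rewrite -natrM ler_nat mulnA.
  have a2 : (2 * (t * k)%:R : R) <= q%:R by rewrite -natrM ler_nat mulnA.
  apply/andP; split; nra.
have one : 1 <= cmod (1 - E q j%:Z ^+ k).
  rewrite -E_pow; apply: le_trans (Re_le_cmod _).
  have -> : complex.Re (1 - E q (j%:Z * k%:Z)) = 1 - complex.Re (E q (j%:Z * k%:Z)) by [].
  by rewrite hRe; lra.
have := @cmod_1subX _ k (cmod_E q j%:Z).
move: (cmod_ge0 (1 - E q j%:Z)) => c0 hc.
have kR : (2 * t * k)%:R <= (q%:R : R) by rewrite ler_nat.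
rewrite !natrM in kR *.
have tR : (0 : R) <= t%:R by [].
nra.
Qed.
Lemma E_ne1 (q : nat) (m : int) : (0 < q)%N -> ~~ (q%:Z %| m)%Z -> E q m != 1.
Proof.
move=> q0 ndvd.
have qz : q%:Z != 0 by rewrite eqz_nat -lt0n.
have h0 := modz_ge0 m qz.
have h1 : (m %% q%:Z)%Z < q%:Z by apply: ltz_pmod; rewrite ltz_nat.
set j := absz (m %% q%:Z)%Z.
have hj : (m %% q%:Z)%Z = j%:Z by rewrite /j gez0_abs.
have j0 : j != 0%N.
  apply/eqP => j0; move: ndvd; rewrite -[X in ~~ X]/(q%:Z %| m)%Z.
  by apply/negP; rewrite negbK; apply/dvdz_mod0P; rewrite hj j0.
have jq : (0 < j < q)%N by rewrite lt0n j0 /= -ltz_nat -hj.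
have -> : E q m = E q j%:Z.
  apply: E_cong => //; rewrite -hj {1}(divz_eq m q%:Z) addrK.
  by rewrite dvdz_mull.
apply/eqP => e1.
have := @LB q j jq; rewrite e1 subrr cmod0 mulr0.
have : (0 < minn j (q - j))%N by lia.
move=> h2 h3.
have : (0 : R) < (2 * minn j (q - j))%:R by rewrite ltr0n; lia.
by rewrite ltNge h3.
Qed.

Lemma ORTH (q : nat) (m : int) : (0 < q)%N ->
  \sum_(b < q) E q (b%:Z * m) = if (q%:Z %| m)%Z then q%:R else 0.
Proof.
move=> q0; case: ifP => hd.
  rewrite (eq_bigr (fun _ => 1)) ?sumr_const ?card_ord // => b _.
  by rewrite -(E0 q); apply: E_cong => //; rewrite subr0 dvdz_mull.
have ne := @E_ne1 q m q0 (negbT hd).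
have e : forall b : 'I_q, E q (b%:Z * m) = E q m ^+ b by move=> b; rewrite mulrC E_pow.
rewrite (eq_bigr _ (fun b _ => e b)).
have h : (E q m - 1) * \sum_(i < q) E q m ^+ i = 0.
  rewrite -subrX1 -E_pow (@E_cong q _ 0) ?E0 ?subrr //.
  by rewrite subr0 dvdz_mull.
move/eqP: h; rewrite mulf_eq0 subr_eq0 (negbTE ne) /=.
by move/eqP.
Qed.
Definition S (q : nat) (f : int -> R[i]) (b : nat) : R[i] :=
  (q%:R)^-1 * \sum_(r < q) f r%:Z * eC ((b%:R * r%:R) / q%:R : R).

Lemma eC_E (q b r : nat) : eC ((b%:R * r%:R) / q%:R : R) = E q (b%:Z * r%:Z).
Proof. by rewrite /E -PoszM -natrM. Qed.

Lemma perz (f : int -> R[i]) (d : nat) : (forall n, f (n + d%:Z) = f n) ->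
  forall n z, f (n + z * d%:Z) = f n.
Proof.
move=> hf n z.
have hn : forall k : nat, forall n, f (n + k%:Z * d%:Z) = f n.
  elim=> [|k IH] n'; first by rewrite mul0r addr0.
  by rewrite -addn1 PoszD mulrDl mul1r addrA hf IH.
case: z => k; first exact: hn.
rewrite NegzE -[in RHS](subrK ((k.+1)%:Z * d%:Z) n) mulNr.
by rewrite hn.
Qed.

Lemma FI (q : nat) (f : int -> R[i]) : (0 < q)%N -> (forall n, f (n + q%:Z) = f n) ->
  forall n : int, f n = \sum_(b < q) S q f b * E q (- (b%:Z * n)).
Proof.
move=> q0 hf n.
have qR : (q%:R : R[i]) != 0 by rewrite pnatr_eq0 -lt0n.
transitivity (\sum_(r < q) (q%:R)^-1 * f r%:Z * \sum_(b < q) E q (b%:Z * (r%:Z - n))); last first.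
  symmetry.
  have step : forall b : 'I_q, S q f b * E q (- (b%:Z * n)) =
     \sum_(r < q) (q%:R)^-1 * f r%:Z * E q (b%:Z * (r%:Z - n)).
    move=> b; rewrite /S -mulrA mulr_suml mulr_sumr; apply: eq_bigr => r _.
    rewrite eC_E -!mulrA -E_add; congr (_ * (_ * E q _)).
    by rewrite mulrBr.
  rewrite (eq_bigr _ (fun b _ => step b)) exchange_big /=.
  by apply: eq_bigr => r _; rewrite mulr_sumr.
have qz : q%:Z != 0 by rewrite eqz_nat -lt0n.
have h0 := modz_ge0 n qz.
have h1 : (n %% q%:Z)%Z < q%:Z by apply: ltz_pmod; rewrite ltz_nat.
set j := absz (n %% q%:Z)%Z.
have hj : (n %% q%:Z)%Z = j%:Z by rewrite /j gez0_abs.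
have jq : (j < q)%N by rewrite -ltz_nat -hj.
under eq_bigr => r _ do rewrite ORTH //.
rewrite (bigD1 (Ordinal jq)) //= big1 ?addr0.
  have -> : (q%:Z %| j%:Z - n)%Z.
    by rewrite -hj {2}(divz_eq n q%:Z) opprD addrCA subrr addr0 rpredN dvdz_mull.
  rewrite mulrAC mulVf // mul1r.
  by rewrite {1}(divz_eq n q%:Z) addrC hj perz.
move=> r hr; case: ifP; last by rewrite mulr0.
rewrite -eqz_mod_dvd => /eqP hm.
move: hr; rewrite -val_eqE /= -eqz_nat -hj -hm modz_small ?eqxx //.
by rewrite ltz_nat ltn_ord andbT.
Qed.
Definition Pmax (m : nat) (f : int -> R[i]) : R := \big[Num.max/0]_(c < m) cmod (S m f c).

Lemma bigmax_seq_ge (I : eqType) (s : seq I) (F : I -> R) i : i \in s ->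
  F i <= \big[Num.max/0]_(j <- s) F j.
Proof.
elim: s => [//|x s IH]; rewrite inE big_cons => /orP[/eqP->|hi].
  by rewrite le_max lexx.
by rewrite le_max IH ?orbT.
Qed.
Lemma bigmax_ge0 (I : Type) (s : seq I) (F : I -> R) : 0 <= \big[Num.max/0]_(j <- s) F j.
Proof. elim/big_rec: _ => [//|i x _ hx]; by rewrite le_max hx orbT. Qed.
Lemma Pmax_ge m f (c : 'I_m) : cmod (S m f c) <= Pmax m f.
Proof. exact: (@bigmax_seq_ge _ (index_enum _) (fun c0 : (ordinal m) => cmod (S m f c0)) c (mem_index_enum c)). Qed.
Lemma Pmax_ge0 m f : 0 <= Pmax m f.
Proof. exact: bigmax_ge0. Qed.

Lemma ltz_ord {k : nat} (i : 'I_k) : 0 <= (i : nat)%:Z < k%:Z.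
Proof. by rewrite ltz_nat ltn_ord. Qed.

Lemma count_le1 (m n : nat) (b : nat) : (0 < m)%N -> (0 < n)%N -> coprime m n ->
  \sum_(c < m) \sum_(c' < n)
     (if ((m * n)%N%:Z %| b%:Z - (c%:Z * n%:Z + c'%:Z * m%:Z))%Z then 1 else 0 : R) <= 1.
Proof.
move=> m0 n0 cop.
rewrite pair_bigA /=.
set P := fun p : 'I_m * 'I_n => ((m * n)%N%:Z %| b%:Z - (p.1%:Z * n%:Z + p.2%:Z * m%:Z))%Z.
case: (pickP P) => [p0 hp0 | hnone].
  rewrite (bigD1 p0) //=.
  rewrite /P in hp0; rewrite hp0 big1 ?addr0 //.
  move=> p hp; case: ifP => // hc.
  have [e1 e2] := @uniq_crt m n b%:Z p.1%:Z p0.1%:Z p.2%:Z p0.2%:Z m0 n0 cop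
    (ltz_ord p.1) (ltz_ord p0.1) (ltz_ord p.2) (ltz_ord p0.2) hc hp0.
  move: hp; case: p e1 e2 {hc} => [x y] /= /eqP e1 /eqP e2.
  rewrite eqz_nat in e1; rewrite eqz_nat in e2.
  by case: p0 {hp0} e1 e2 => [x0 y0] /= e1 e2; rewrite xpair_eqE -!val_eqE /= e1 e2.
rewrite big1 // => p _; rewrite /P in hnone; by rewrite hnone.
Qed.
Lemma BS_key (m n : nat) (g h f : int -> R[i]) (b : nat) : (0 < m)%N -> (0 < n)%N ->
  (forall r, g (r + m%:Z) = g r) -> (forall r, h (r + n%:Z) = h r) ->
  (forall r, f r = g r * h r) ->
  S (m * n) f b = \sum_(c < m) \sum_(c' < n) (S m g c * S n h c' *
     (if ((m * n)%N%:Z %| b%:Z - (c%:Z * n%:Z + c'%:Z * m%:Z))%Z then 1 else 0)).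
Proof.
move=> m0 n0 hg hh hf.
have mn0 : (0 < m * n)%N by rewrite muln_gt0 m0.
have e1 : forall r : 'I_(m * n), f r%:Z * eC ((b%:R * r%:R) / (m * n)%:R : R) =
   \sum_(c < m) \sum_(c' < n) S m g c * S n h c' *
      E (m * n) (r%:Z * (b%:Z - (c%:Z * n%:Z + c'%:Z * m%:Z))).
  move=> r; rewrite eC_E hf (@FI m g m0 hg r) (@FI n h n0 hh r) mulr_suml mulr_suml.
  apply: eq_bigr => c _; rewrite mulr_sumr mulr_suml; apply: eq_bigr => c' _.
  rewrite (@E_scale m n _ n0) (@E_scale n m _ m0) [(n * m)%N]mulnC.
  have -> : E (m * n) (r%:Z * (b%:Z - (c%:Z * n%:Z + c'%:Z * m%:Z))) =
     E (m * n) (- (c%:Z * r%:Z) * n%:Z) * E (m * n) (- (c'%:Z * r%:Z) * m%:Z) *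
     E (m * n) (b%:Z * r%:Z).
    by rewrite -!E_add; congr E; ring.
  ring.
rewrite [S (m * n) f b]/S (eq_bigr _ (fun r _ => e1 r)) exchange_big /=.
rewrite mulr_sumr; apply: eq_bigr => c _.
rewrite exchange_big /= mulr_sumr; apply: eq_bigr => c' _.
rewrite -mulr_sumr ORTH //.
have mnR : ((m * n)%N%:R : R[i]) != 0 by rewrite pnatr_eq0 -lt0n.
by case: ifP => _; [rewrite mulrCA mulVf // mulr1 | rewrite !mulr0].
Qed.
Lemma BS (m n : nat) (g h f : int -> R[i]) (b : nat) : (0 < m)%N -> (0 < n)%N ->
  coprime m n ->
  (forall r, g (r + m%:Z) = g r) -> (forall r, h (r + n%:Z) = h r) ->
  (forall r, f r = g r * h r) ->
  cmod (S (m * n) f b) <= Pmax m g * Pmax n h.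
Proof.
move=> m0 n0 cop hg hh hf.
rewrite (@BS_key m n g h f b m0 n0 hg hh hf).
apply: le_trans (cmod_sum _ _ _ _) _.
apply: (@le_trans _ _ (\sum_(c < m) \sum_(c' < n) (Pmax m g * Pmax n h) *
     (if ((m * n)%N%:Z %| b%:Z - (c%:Z * n%:Z + c'%:Z * m%:Z))%Z then 1 else 0 : R))).
  apply: ler_sum => c _; apply: le_trans (cmod_sum _ _ _ _) _; apply: ler_sum => c' _.
  rewrite cmodM [cmod (S m g c * _)]cmodM; case: ifP => _; last by rewrite cmod0 !mulr0.
  rewrite cmod1 !mulr1.
  by apply: ler_pM; rewrite ?cmod_ge0 ?Pmax_ge.
under eq_bigr => c _ do rewrite -mulr_sumr.
rewrite -mulr_sumr -[X in _ <= X]mulr1.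
apply: ler_wpM2l; first by rewrite mulr_ge0 ?Pmax_ge0.
exact: count_le1.
Qed.
Lemma bigmax_le (I : Type) (s : seq I) (F : I -> R) (B : R) : 0 <= B ->
  (forall i, F i <= B) -> \big[Num.max/0]_(j <- s) F j <= B.
Proof. move=> B0 hF; elim/big_rec: _ => [//|i x _ hx]; by rewrite ge_max hF hx. Qed.

Lemma Pmax_le m f (B : R) : 0 <= B -> (forall b : nat, cmod (S m f b) <= B) -> Pmax m f <= B.
Proof. by move=> B0 hb; apply: bigmax_le. Qed.

Lemma IND (q : nat) (a : nat -> int -> R[i]) : (0 < q)%N ->
  (forall d : nat, (d %| q)%N -> forall n : int, a d (n + d%:Z) = a d n) ->
  (forall d : nat, (d %| q)%N -> forall n : int, cmod (a d n) <= 1) ->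
  (forall d1 d2 : nat, (d1 * d2 %| q)%N -> coprime d1 d2 ->
       forall n : int, a (d1 * d2)%N n = a d1 n * a d2 n) ->
  forall s : seq nat, uniq s -> all (fun p => p \in primes q) s ->
  ((\prod_(p <- s) p ^ logn p q) %| q)%N /\
  forall b : nat, cmod (S (\prod_(p <- s) p ^ logn p q)%N (a (\prod_(p <- s) p ^ logn p q)%N) b)
     <= \prod_(p <- s) Pmax (p ^ logn p q) (a (p ^ logn p q)%N).
Proof.
move=> q0 hper hbd hmul; elim=> [|p s IH] /=.
  move=> _ _; rewrite !big_nil dvd1n; split => // b.
  rewrite /S big_ord1 invr1 mul1r cmodM cmod_eC mulr1.
  exact: hbd.
move=> /andP[ps us] /andP[pq aq].
have [dq hb] := IH us aq.
rewrite !big_cons.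
set e := logn p q.
set D := (\prod_(j <- s) j ^ logn j q)%N in dq hb *.
have pp : prime p by move: pq; rewrite mem_primes => /and3P[].
have peq : (p ^ e %| q)%N by exact: pfactor_dvdnn.
have cop : coprime (p ^ e) D.
  rewrite /D big_seq; apply: (big_ind (fun x => coprime (p ^ e) x)).
  - exact: coprimen1.
  - by move=> x y hx hy; rewrite coprimeMr hx hy.
  move=> p' hp'; apply: coprimeXl; apply: coprimeXr.
  have pp' : prime p' by move/allP: aq => /(_ _ hp'); rewrite mem_primes => /and3P[].
  rewrite prime_coprime // dvdn_prime2 //; apply/eqP => epp; move: ps; by rewrite epp hp'.
have dq' : (p ^ e * D %| q)%N by rewrite Gauss_dvd // peq dq.
split=> // b.
have D0 : (0 < D)%N by apply: dvdn_gt0 dq.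
have pe0 : (0 < p ^ e)%N by rewrite expn_gt0 prime_gt0.
apply: le_trans (@BS (p ^ e) D (a (p ^ e)%N) (a D) (a (p ^ e * D)%N) b pe0 D0 cop (hper _ peq) (hper _ dq) (hmul _ _ dq' cop)) _.
apply: ler_wpM2l; first exact: Pmax_ge0.
apply: Pmax_le => //.
by rewrite big_seq; apply: prodr_ge0 => i _; apply: Pmax_ge0.
Qed.
Lemma ln2_ge : 1 / 2 <= ln (2 : R).
Proof.
have h := @le_ln1Dx R (- (1 / 2)) ltac:(lra).
have e : 1 + - (1 / 2) = (1 / 2 : R) by lra.
rewrite e mul1r lnV ?posrE // in h; lra.
Qed.

Lemma H_le (n : nat) : (1 <= n)%N -> \sum_(i < n) (i.+1%:R : R)^-1 <= 1 + ln n%:R.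
Proof.
elim: n => [//|n IH] _.
case: n IH => [|n] IH; first by rewrite big_ord1 ln1 addr0 invr1.
rewrite big_ord_recr /=.
have {}IH := IH isT.
have np : (0 : R) < n.+1%:R by rewrite ltr0n.
have np2 : (0 : R) < n.+2%:R by rewrite ltr0n.
suff : (n.+2%:R : R)^-1 <= ln n.+2%:R - ln n.+1%:R .
  move=> hx; apply: le_trans (lerD IH hx) _.
  by rewrite -addrA [ln n.+1%:R + _]addrC subrK.

rewrite -ln_div ?posrE //.
have h := @le_ln1Dx R (- (n.+2%:R)^-1).
have e : 1 + - (n.+2%:R : R)^-1 = (n.+2%:R / n.+1%:R)^-1.
  have e2 : (n.+2%:R : R) = n.+1%:R + 1 by rewrite [LHS]mulrSr.
  rewrite invf_div e2.
  have : (n.+1%:R : R) + 1 != 0 by rewrite -e2 gt_eqF.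
  move: (gt_eqF np) => h1 h2.
  by rewrite -[X in X - _](divff h2) -[X in _ - X]mul1r -mulrBl addrK.
rewrite e lnV ?posrE ?divr_gt0 // in h.
have : - (n.+2%:R : R)^-1 > -1.
  rewrite ltrNl opprK invf_lt1 // ltr1n //.
by move=> hh; have := h hh; rewrite lerN2.
Qed.
Lemma harm_sum (q : nat) : (0 < q)%N ->
  \sum_(b < q | (b : nat) != 0%N) ((((b : nat)%:R : R)^-1 + ((q - b)%:R)^-1)) <= 6 * ln q%:R.
Proof.
case: q => [//|q] _.
rewrite big_mkcond big_ord_recl /= add0r.
rewrite (eq_bigr (fun i : 'I_q => (i.+1%:R : R)^-1 + ((q - i)%:R)^-1)); last first.
  by move=> i _; rewrite /bump /= add1n subSS.
rewrite big_split /=.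
have -> : \sum_(i < q) ((q - i)%:R : R)^-1 = \sum_(i < q) (i.+1%:R : R)^-1.
  rewrite (reindex_inj rev_ord_inj) /=; apply: eq_bigr => i _.
  by rewrite subKn.
case: q => [|q]; first by rewrite big_ord0 ln1; lra.
have h := @H_le q.+1 isT.
have l2 := ln2_ge.
have lm : ln (q.+1%:R : R) <= ln q.+2%:R by rewrite ler_ln ?posrE ?ltr0n // ler_nat.
have l2q : ln (2 : R) <= ln q.+2%:R by rewrite ler_ln ?posrE ?ltr0n // ler_nat.
lra.
Qed.
Lemma GB (q N : nat) (b : 'I_q) : (b : nat) != 0%N ->
  cmod (\sum_(k < N) E q (- (b : nat)%:Z) ^+ k) <=
  q%:R * ((((b : nat)%:R : R)^-1 + ((q - b)%:R)^-1)).
Proof.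
move=> b0.
have bq := ltn_ord b.
have q0 : (0 < q)%N by lia.
have jq : (0 < q - b < q)%N by lia.
have ew : E q (- (b : nat)%:Z) = E q (q - b)%N%:Z.
  apply: E_cong => //; rewrite -opprB opprK rpredN.
  have -> : ((q - b)%N%:Z + (b : nat)%:Z) = q%:Z by rewrite -PoszD subnK // ltnW.
  exact: dvdzz.
have hLB := @LB q (q - b)%N jq.
have e3 : (q - (q - b))%N = b by rewrite subKn // ltnW.
rewrite e3 in hLB.
rewrite ew in hLB *.
set w := E q (q - b)%N%:Z in hLB *.
set G := \sum_(k < N) w ^+ k.
set c := cmod (1 - w) in hLB *.
have hG : c * cmod G <= 2.
  have e : (1 - w) * G = - (w ^+ N - 1) by rewrite subrX1 -mulNr opprB.
  rewrite /c -cmodM e cmodN.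
  apply: le_trans (cmodD _ _) _; rewrite cmodN cmod1 cmodX cmod_E expr1n; lra.
have G0 := cmod_ge0 G.
have c0 := cmod_ge0 (1 - w).
set t := minn (q - b) b in hLB.
have t1 : (1 <= t)%N by rewrite /t; lia.
have tR : (1 : R) <= t%:R by rewrite ler1n.
have qR : (0 : R) <= q%:R by [].
rewrite natrM in hLB.
have htG : t%:R * cmod G <= q%:R by nra.
have tinv : (t%:R : R)^-1 <= ((b : nat)%:R)^-1 + ((q - b)%:R)^-1.
  case: (leqP (q - b) b) => h.
    have -> : t = (q - b)%N by rewrite /t; lia.
    by rewrite lerDr invr_ge0.
  have -> : t = b by rewrite /t; lia.
  by rewrite lerDl invr_ge0.
have tpos : (0 : R) < t%:R by lra.
apply: le_trans (_ : q%:R * (t%:R)^-1 <= _); last by apply: ler_wpM2l.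
by rewrite ler_pdivlMr // mulrC.
Qed.
Lemma main_bound (q : nat) (a : nat -> int -> R[i]) (M : int) (N : nat) :
    (0 < q)%N -> (0 < N)%N ->
    (forall d : nat, (d %| q)%N -> forall n : int, a d (n + d%:Z) = a d n) ->
    (forall d : nat, (d %| q)%N -> forall n : int, cmod (a d n) <= 1) ->
    (forall d1 d2 : nat, (d1 * d2 %| q)%N -> coprime d1 d2 ->
       forall n : int, a (d1 * d2)%N n = a d1 n * a d2 n) ->
    N%:R^-1 * cmod (\sum_(0 <= k < N) a q (M + k%:Z))
      <= 6%:R * (1 + q%:R * ln (q%:R : R) / N%:R) *
         \prod_(p <- primes q) Pmax (p ^ logn p q) (a (p ^ logn p q)%N).
Proof.
move=> q0 N0 hper hbd hmul.
set P := \prod_(p <- primes q) _.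
have hP : forall b : nat, cmod (S q (a q) b) <= P.
  have [_ hb] := @IND q a q0 hper hbd hmul (primes q) (primes_uniq q) (introT allP (fun p h => h)).
  have eq : (\prod_(p <- primes q) p ^ logn p q)%N = q.
    by rewrite [in RHS](prod_prime_decomp q0) prime_decompE big_map.
  by move=> b; have := hb b; rewrite eq.
have P0 : 0 <= P by apply: prodr_ge0 => p _; apply: Pmax_ge0.
have hA := hper q (dvdnn q).
have e1 : \sum_(0 <= k < N) a q (M + k%:Z) = \sum_(b < q) S q (a q) b *
     E q (- ((b : nat)%:Z * M)) * \sum_(k < N) E q (- (b : nat)%:Z) ^+ k.
  rewrite big_mkord.
  rewrite (eq_bigr _ (fun (k : 'I_N) _ => @FI q (a q) q0 hA (M + (k : nat)%:Z))) exchange_big /=.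
  apply: eq_bigr => b _; rewrite mulr_sumr; apply: eq_bigr => k _.
  by rewrite -mulrA -E_pow -E_add; congr (_ * E q _); ring.
rewrite e1.
have hsum : cmod (\sum_(b < q) S q (a q) b * E q (- ((b : nat)%:Z * M)) *
     \sum_(k < N) E q (- (b : nat)%:Z) ^+ k) <=
     P * (N%:R + q%:R * (6 * ln q%:R)).
  apply: le_trans (cmod_sum _ _ _ _) _.
  apply: (@le_trans _ _ (\sum_(b < q) P * cmod (\sum_(k < N) E q (- (b : nat)%:Z) ^+ k))).
    apply: ler_sum => b _; rewrite cmodM [cmod (S _ _ _ * _)]cmodM cmod_E mulr1.
    by apply: ler_wpM2r; rewrite ?cmod_ge0 ?hP.
  rewrite -mulr_sumr; apply: ler_wpM2l => //.
  rewrite (bigD1 (Ordinal q0)) //=.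
  apply: lerD.
    rewrite oppr0 E0 (eq_bigr (fun _ => 1)); last by move=> k _; rewrite expr1n.
    by rewrite sumr_const card_ord -[1 *+ N]/(N%:R) cmod_nat.
  apply: (@le_trans _ _ (\sum_(b < q | (b : nat) != 0%N) q%:R * ((((b : nat)%:R : R)^-1 + ((q - b)%:R)^-1)))).
    rewrite (eq_bigl (fun b : 'I_q => (b : nat) != 0%N)); last by move=> b; rewrite -val_eqE.
    by apply: ler_sum => b hb; apply: GB.
  by rewrite -mulr_sumr; apply: ler_wpM2l => //; apply: harm_sum.
have NR : (0 : R) < N%:R by rewrite ltr0n.
have L0 : (0 : R) <= ln q%:R by apply: ln_ge0; rewrite ler1n.
have X0 : (0 : R) <= q%:R * ln q%:R / N%:R by rewrite divr_ge0 ?mulr_ge0.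
apply: le_trans (_ : N%:R^-1 * (P * (N%:R + q%:R * (6 * ln q%:R))) <= _).
  by apply: ler_wpM2l; rewrite ?invr_ge0 ?ler0n.
have -> : N%:R^-1 * (P * (N%:R + q%:R * (6 * ln q%:R))) = P * (1 + 6 * (q%:R * ln q%:R / N%:R)).
  by field; rewrite gt_eqF.
set X := q%:R * ln q%:R / N%:R in X0 *.
nra.
Qed.
End S.

Theorem lemma6p1 :
  exists C : nat, forall (R : realType) (q : nat) (a : nat -> int -> R[i])
    (M : int) (N : nat),
    (0 < q)%N -> (0 < N)%N ->
    (forall d : nat, (d %| q)%N -> forall n : int, a d (n + d%:Z) = a d n) ->
    (forall d : nat, (d %| q)%N -> forall n : int, cmod (a d n) <= 1) ->
    (forall d1 d2 : nat, (d1 * d2 %| q)%N -> coprime d1 d2 ->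
       forall n : int, a (d1 * d2)%N n = a d1 n * a d2 n) ->
    N%:R^-1 * cmod (\sum_(0 <= k < N) a q (M + k%:Z))
      <= C%:R * (1 + q%:R * ln (q%:R : R) / N%:R) *
         \prod_(p <- primes q)
           \big[Num.max/0]_(b < p ^ logn p q)
             cmod ((p ^ logn p q)%:R^-1 *
                   \sum_(r < p ^ logn p q)
                      a (p ^ logn p q)%N r%:Z *
                      eC ((b%:R * r%:R) / (p ^ logn p q)%:R : R)).
Proof.
exists 6%N => R q a M N q0 N0 h1 h2 h3.
exact: (@main_bound R q a M N q0 N0 h1 h2 h3).
Qed.
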